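(* Let $q$ be a prime power and $m\ge1$. For every Reed–Solomon code $\mathcal{C}$ over $\mathbb{F}_{q^m}$, every generalized subfield subcode of $\mathcal{C}$ is an alternant code over $\mathbb{F}_q$ (defined from a generalized Reed–Solomon code over $\mathbb{F}_{q^m}$); conversely, every such alternant code is a generalized subfield subcode of some Reed–Solomon code over $\mathbb{F}_{q^m}$. That is, the generalized subfield subcodes of Reed–Solomon codes are exactly the alternant codes.
   Context: Reed–Solomon code: for $1\le k\le n$ and pairwise distinct $a_1,\dots,a_n\in\mathbb{F}_{q^m}$, $RS_k(a)=\{(g(a_1),\dots,g(a_n)) : g\in\mathbb{F}_{q^m}[X],\ \deg g<k\}$. Generalized Reed–Solomon code: the image of a Reed–Solomon code under right multiplication by an $n\times n$ monomial matrix over $\mathbb{F}_{q^m}$, i.e. $\{(v_1g(a_1),\dots,v_ng(a_n)):\deg g<k\}$ with all $v_i\neq0$. Alternant code: $\mathcal{D}\cap\mathbb{F}_q^n$ for a generalized Reed–Solomon code $\mathcal{D}$ over $\mathbb{F}_{q^m}$. Generalized subfield subcode: for a basis $\mathcal{B}=(b_1,\dots,b_m)$ of $\mathbb{F}_{q^m}$ over $\mathbb{F}_q$, let $\phi_{\mathcal{B}}(\sum_i x_ib_i)=(x_1,\dots,x_m)$ and $Im_q(\mathcal{C})=\{(\phi_{\mathcal{B}}(c_1)|\cdots|\phi_{\mathcal{B}}(c_n)):c\in\mathcal{C}\}\subseteq(\mathbb{F}_q^m)^n$. For $f=(f_1,\dots,f_n)\in GL_q(m)^n$ (the $\mathbb{F}_q$-linear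 automorphisms of $\mathbb{F}_q^m$) and a permutation $\pi$ of $\{1,\dots,n\}$, $mon=\pi\circ f$ applies $f_i$ to the $i$-th block and then permutes blocks by $\pi$. For $u\in\{1,\dots,m\}^n$ and $D\subseteq(\mathbb{F}_q^m)^n$, with $x_{j,l}$ the $l$-th coordinate of block $j$, $S_u(D)=\{(x_{1,u_1},\dots,x_{n,u_n}):x\in D,\ x_{j,l}=0\ \forall j,\forall l\ne u_j\}$. The generalized subfield subcodes of $\mathcal{C}$ are the codes $S_u(mon(Im_q(\mathcal{C})))$ for all choices of $\mathcal{B},u,f,\pi$. *)

(* Defs.v *)
From HB Require Import structures.
From mathcomp Require Import all_boot all_order all_algebra all_fingroup all_field.
Set Implicit Arguments. Unset Strict Implicit. Unset Printing Implicit Defensive.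
Import GRing.Theory.
Local Open Scope ring_scope.

Definition code (R : Type) (n : nat) := 'rV[R]_n -> Prop.

Definition RS (L : fieldType) (n k : nat) (a : 'I_n -> L) : code L n :=
  fun c => exists g : {poly L}, (size g <= k)%N /\ forall i, c 0 i = g.[a i].

Definition GRS (L : fieldType) (n k : nat) (a v : 'I_n -> L) : code L n :=
  fun c => exists g : {poly L}, (size g <= k)%N /\ forall i, c 0 i = v i * g.[a i].

Definition subfield_subcode (F : fieldType) (L : fieldExtType F) (n : nat)
  (D : code L n) : code F n :=
  fun x => D (map_mx (in_alg L) x).

Definition is_alternant (F : fieldType) (L : fieldExtType F) (n : nat)
  (E : code F n) : Prop :=
  exists (k : nat) (a v : 'I_n -> L),
    [/\ (1 <= k <= n)%N, injective a, (forall i, v i != 0) &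
        forall x, E x <-> subfield_subcode (GRS k a v) x].

(* Im_q(C): row j of the n x m matrix is the block phi_B(c_j). *)
Definition Imq (F : fieldType) (L : fieldExtType F) (n : nat)
  (B : (\dim {:L}).-tuple L) (C : code L n) : 'M[F]_(n, \dim {:L}) -> Prop :=
  fun X => exists c, C c /\ forall j l, X j l = coord B l (c 0 j).

(* mon = pi o f : each block j is mapped by the invertible matrix M j
   (acting on row vectors), and the blocks are permuted by s. *)
Definition mon (F : fieldType) (n m : nat) (M : 'I_n -> 'M[F]_m) (s : 'S_n)
  (X : 'M[F]_(n, m)) : 'M[F]_(n, m) :=
  \matrix_(j, l) (row (s j) X *m M (s j)) 0 l.

Definition Su (F : fieldType) (n m : nat) (u : 'I_n -> 'I_m)
  (D : 'M[F]_(n, m) -> Prop) : code F n :=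
  fun y => exists X, [/\ D X, (forall j l, l != u j -> X j l = 0) &
                         forall j, y 0 j = X j (u j)].

Definition is_gen_subfield_subcode (F : fieldType) (L : fieldExtType F)
  (n : nat) (C : code L n) (E : code F n) : Prop :=
  exists (B : (\dim {:L}).-tuple L) (u : 'I_n -> 'I_(\dim {:L}))
         (M : 'I_n -> 'M[F]_(\dim {:L})) (s : 'S_n),
    [/\ basis_of fullv B, (forall j, M j \in unitmx) &
        forall y, E y <-> Su u (fun X => exists Y, Imq B C Y /\ X = mon M s Y) y].

(* Main.v *)
Require Import Defs.
From HB Require Import structures.
From mathcomp Require Import all_boot all_order all_algebra all_fingroup all_field.
Set Implicit Arguments. Unset Strict Implicit. Unset Printing Implicit Defensive.
Import GRing.Theory.
Local Open Scope ring_scope.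

Section Aux.
Variables (F : fieldType) (L : fieldExtType F).
Local Notation d := (\dim {:L}).
Variable B : d.-tuple L.
Hypothesis HB : basis_of fullv B.

Definition crow (x : L) : 'rV[F]_d := \row_l coord B l x.
Definition vecr (r : 'rV[F]_d) : L := \sum_p r 0 p *: B`_p.

Lemma crow_vecr r : crow (vecr r) = r.
Proof. by apply/rowP => l; rewrite mxE coord_sum_free ?(basis_free HB). Qed.

Lemma vecr_crow x : vecr (crow x) = x.
Proof.
rewrite [RHS](coord_basis HB (memvf x)); apply: eq_bigr => i _; by rewrite mxE.
Qed.

Lemma crow_inj : injective crow.
Proof. by move=> x y E; rewrite -(vecr_crow x) E vecr_crow. Qed.

Lemma crowZ (y : F) x : crow (y *: x) = y *: crow x.
Proof. by apply/rowP => l; rewrite !mxE linearZ. Qed.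

Lemma crowD x z : crow (x + z) = crow x + crow z.
Proof. by apply/rowP => l; rewrite !mxE linearD. Qed.

Lemma crow_sum (I : finType) (f : I -> L) : crow (\sum_i f i) = \sum_i crow (f i).
Proof.
apply/rowP => l; rewrite mxE linear_sum summxE; apply: eq_bigr => i _; by rewrite mxE.
Qed.

Definition mulmat (lam : L) : 'M[F]_d := \matrix_(p, l) coord B l (B`_p * lam).

Lemma crow_mulmat x lam : crow x *m mulmat lam = crow (x * lam).
Proof.
rewrite -{2}(vecr_crow x) /vecr mulr_suml crow_sum.
apply/rowP => l; rewrite !mxE summxE; apply: eq_bigr => p _.
by rewrite !mxE -scalerAl linearZ.
Qed.

Lemma crow_B (p : 'I_d) : crow B`_p = delta_mx 0 p.
Proof. by apply/rowP => l; rewrite !mxE coord_free ?(basis_free HB) // eqxx eq_sym. Qed.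

Lemma mulmat_unit lam : lam != 0 -> mulmat lam \in unitmx.
Proof.
move=> nz; suff: mulmat lam *m mulmat lam^-1 = 1%:M by case/mulmx1_unit.
apply/row_matrixP => p; rewrite row_mul.
have -> : row p (mulmat lam) = crow (B`_p * lam) by apply/rowP => l; rewrite !mxE.
rewrite crow_mulmat -mulrA divff // mulr1 crow_B.
by apply/rowP => l; rewrite !mxE eq_sym.
Qed.

Lemma crowM_unit (M : 'M[F]_d) x r : M \in unitmx ->
  (crow x *m M = r) <-> (x = vecr (r *m invmx M)).
Proof.
move=> uM; split => [<-|->]; first by rewrite mulmxK // vecr_crow.
by rewrite crow_vecr mulmxKV.
Qed.

End Aux.

Lemma row_mon (F : fieldType) (n m : nat) (M : 'I_n -> 'M[F]_m) (s : 'S_n)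
  (X : 'M[F]_(n, m)) j : row j (mon M s X) = row (s j) X *m M (s j).
Proof. by apply/rowP => l; rewrite !mxE. Qed.

Lemma row_delta (F : fieldType) m (R : 'rV[F]_m) p z :
  ((forall l, l != p -> R 0 l = 0) /\ z = R 0 p) <-> R = z *: delta_mx 0 p.
Proof.
split => [[H1 ->]|->].
  apply/rowP => l; rewrite !mxE eqxx /=.
  by case: (eqVneq l p) => [->|/H1 ->]; rewrite ?mulr1 ?mulr0.
split; last by rewrite !mxE !eqxx mulr1.
by move=> l /negPf nl; rewrite !mxE nl mulr0.
Qed.

Lemma gss_char (F : fieldType) (L : fieldExtType F) (n k : nat) (a : 'I_n -> L)
  (B : (\dim {:L}).-tuple L) (u : 'I_n -> 'I_(\dim {:L}))
  (M : 'I_n -> 'M[F]_(\dim {:L})) (s : 'S_n) (y : 'rV[F]_n) :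
  Su u (fun X => exists Y, Imq B (RS k a) Y /\ X = mon M s Y) y <->
  exists g : {poly L}, (size g <= k)%N /\
    forall j, crow B (g.[a (s j)]) *m M (s j) = y 0 j *: delta_mx 0 (u j).
Proof.
split.
  move=> [X [[Y [[c [[g [Hg Hc]] HY]] ->]] H1 H2]].
  exists g; split => // j.
  have -> : crow B g.[a (s j)] = row (s j) Y.
    by apply/rowP => l; rewrite !mxE HY Hc.
  rewrite -row_mon; apply/row_delta; split.
    by move=> l nl; rewrite mxE H1.
  by rewrite mxE H2.
move=> [g [Hg H]].
pose c : 'rV[L]_n := \row_i g.[a i].
pose Y : 'M[F]_(n, \dim {:L}) := \matrix_(j, l) coord B l (c 0 j).
exists (mon M s Y); split.
- exists Y; split => //; exists c; split; last by move=> j l; rewrite mxE.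
  by exists g; split => // i; rewrite mxE.
- move=> j l nl.
  have := H j; have -> : crow B g.[a (s j)] = row (s j) Y.
    by apply/rowP => l'; rewrite !mxE.
  rewrite -row_mon => /row_delta [H1 _].
  by have := H1 l nl; rewrite mxE.
- move=> j.
  have := H j; have -> : crow B g.[a (s j)] = row (s j) Y.
    by apply/rowP => l'; rewrite !mxE.
  rewrite -row_mon => /row_delta [_ ->].
  by rewrite mxE.
Qed.

Lemma vecrZ (F : fieldType) (L : fieldExtType F) (B : (\dim {:L}).-tuple L)
  (HB : basis_of fullv B) (y : F) r : vecr B (y *: r) = y *: vecr B r.
Proof. by apply: (crow_inj HB); rewrite crowZ !crow_vecr. Qed.

Lemma delta_neq0 (F : fieldType) m (p : 'I_m) : delta_mx 0 p != 0 :> 'rV[F]_m.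
Proof.
apply/eqP => /rowP /(_ p); rewrite !mxE !eqxx => /eqP; by rewrite oner_eq0.
Qed.

Unset Implicit Arguments.
Set Strict Implicit.

Theorem corollary3 (F : finFieldType) (L : fieldExtType F) (n : nat) :
  (forall (k : nat) (a : 'I_n -> L), (1 <= k <= n)%N -> injective a ->
     forall E : code F n, is_gen_subfield_subcode (RS k a) E -> is_alternant L E)
  /\
  (forall E : code F n, is_alternant L E ->
     exists (k : nat) (a : 'I_n -> L),
       [/\ (1 <= k <= n)%N, injective a & is_gen_subfield_subcode (RS k a) E]).
Proof.
split.
  move=> k a Hk Ha E [B [u [M [s [HB HM HE]]]]].
  pose w j := vecr B (delta_mx 0 (u j) *m invmx (M (s j))).
  have wnz j : w j != 0.
    apply/eqP => w0; have := crow_vecr HB (delta_mx 0 (u j) *m invmx (M (s j))).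
    rewrite -/(w j) w0.
    have -> : crow B 0 = 0 by apply/rowP => l; rewrite !mxE linear0.
    move/(congr1 (mulmx^~ (M (s j)))); rewrite mulmxKV // mul0mx => /esym.
    by apply/eqP; apply: delta_neq0.
  have key j (c : L) (z : F) :
      crow B c *m M (s j) = z *: delta_mx 0 (u j) <-> (z%:A = (w j)^-1 * c).
    apply: iff_trans; first exact: crowM_unit.
    rewrite -scalemxAl vecrZ // -/(w j).
    split => [->|Hz]; first by rewrite -scalerAr mulVf.
    have -> : c = w j * z%:A by rewrite Hz mulrA divff // mul1r.
    by rewrite mulr_algr.
  exists k, (a \o s), (fun j => (w j)^-1); split => //.
  - by move=> i j /Ha /perm_inj.
  - by move=> j; rewrite invr_eq0.
  move=> y; apply: iff_trans; first exact: HE.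
  apply: iff_trans; first exact: gss_char.
  split => -[g [Hg H]]; exists g; split => // i.
    by rewrite mxE /=; apply/key/H.
  by apply/key; have := H i; rewrite mxE.
move=> E [k [a [v [Hk Ha Hv HE]]]]; exists k, a; split => //.
pose B := vbasis (fullv : {vspace L}).
have HB : basis_of fullv B := vbasisP fullv.
have d0 : (0 < \dim {:L})%N by apply: adim_gt0.
pose p0 : 'I_(\dim {:L}) := Ordinal d0.
pose b := B`_p0.
have bnz : b != 0 by apply: (basis_not0 HB); apply: mem_nth; rewrite size_tuple.
have key j (c : L) (z : F) :
    crow B c *m mulmat B (b * v j) = z *: delta_mx 0 p0 <-> (z%:A = v j * c).
  rewrite crow_mulmat // -(crow_B HB) -crowZ; split.
    move/(crow_inj HB) => H; apply: (mulIf bnz).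
    by rewrite mulr_algl -H [b * _]mulrC mulrA [c * _]mulrC.
  by move=> H; rewrite -mulr_algl H [b * _]mulrC mulrA [c * _]mulrC.
exists B, (fun _ => p0), (fun j => mulmat B (b * v j)), 1%g; split => //.
  by move=> j; apply: (mulmat_unit HB); rewrite mulf_neq0.
move=> y; apply: iff_trans; first exact: HE.
apply: iff_sym; apply: iff_trans; first exact: gss_char.
split => -[g [Hg H]]; exists g; split => // i.
  by rewrite mxE /=; apply/key; have := H i; rewrite perm1.
by rewrite perm1; apply/key; have := H i; rewrite mxE.
Qed.
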